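(* Let $n\ge1$ and $S\subseteq[n-1]$. Then \[\#\{\pi\in\mathrm{Av}_n(132)\mid \mathrm{Des}(\pi)=S\}=\#\{\mathcal D\text{ Dyck path of semilength } n\mid \delta(\mathcal D)=\alpha(S)\}.\]
   Context: $\mathrm{Av}_n(132)$ is the set of permutations of $[n]=\{1,\dots,n\}$ with no subsequence order-isomorphic to $132$. $\mathrm{Des}(\pi)=\{i\in[n-1]:\pi(i)>\pi(i+1)\}$. For $S=\{s_1<\dots<s_m\}\subseteq[n-1]$, $\alpha(S)$ is the composition $(s_1,s_2-s_1,\dots,s_m-s_{m-1},n-s_m)$ of $n$. A Dyck path of semilength $n$ is a word in $U,D$ with $n$ letters of each kind such that every prefix has at least as many $U$'s as $D$'s. Writing such a path uniquely as $U^{\alpha_1}D^{\delta_1}U^{\alpha_2}D^{\delta_2}\cdots U^{\alpha_k}D^{\delta_k}$ with all exponents positive, its ascent composition is $(\alpha_1,\dots,\alpha_k)$ and its descent composition is $\delta(\mathcal D)=(\delta_1,\dots,\delta_k)$. *)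

(* Defs.v *)
From mathcomp Require Import all_boot all_order all_fingroup.
Set Implicit Arguments. Unset Strict Implicit. Unset Printing Implicit Defensive.

(* Permutations of [n] are modelled as 'S_n (permutations of 'I_n = {0..n-1});
   position p (1-based) corresponds to ordinal p-1.  Values are compared as nats,
   which is order-isomorphic to [n]. *)

Definition contains132 n (pi : 'S_n) : bool :=
  [exists i : 'I_n, exists j : 'I_n, exists k : 'I_n,
     [&& i < j, j < k, pi i < pi k & pi k < pi j]].

Definition avoids132 n (pi : 'S_n) : bool := ~~ contains132 pi.

(* Descent set, as a set of natural numbers in [n-1] = {1,...,n-1} (1-based):
   d is a descent iff pi(d) > pi(d+1) in 1-based positions, i.e. the entry at
   0-based index d-1 exceeds the entry at 0-based index d. *)
Definition Des n (pi : 'S_n) : seq nat :=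
  [seq d <- iota 1 n.-1 | nth 0 [seq val (pi x) | x <- enum 'I_n] d.-1 >
                          nth 0 [seq val (pi x) | x <- enum 'I_n] d].

(* A subset S of [n-1] is represented by its strictly increasing list of
   elements (each in {1,...,n-1}). *)
Definition subset_of_nm1 n (S : seq nat) : bool :=
  sorted ltn S && all (fun s => (1 <= s) && (s <= n.-1)) S.

Definition alpha n (S : seq nat) : seq nat :=
  rcons (pairmap (fun a b => b - a) 0 S) (n - last 0 S).

(* Dyck paths: words over bool, true = U, false = D *)
Definition is_dyck n (w : seq bool) : bool :=
  [&& size w == n.*2, count id w == n, count negb w == n &
      all (fun i => count negb (take i w) <= count id (take i w)) (iota 0 (size w).+1)].

Fixpoint runs (w : seq bool) : seq (bool * nat) :=
  match w with
  | [::] => [::]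
  | b :: w' =>
      match runs w' with
      | (c, k) :: r => if b == c then (c, k.+1) :: r else (b, 1) :: (c, k) :: r
      | [::] => [:: (b, 1)]
      end
  end.

Definition descent_comp (w : seq bool) : seq nat :=
  [seq p.2 | p <- runs w & ~~ p.1].

Definition dyck_set n : {set (n.*2).-tuple bool} :=
  [set w : (n.*2).-tuple bool | is_dyck n w].

(* Main.v *)
Require Import Defs.
From mathcomp Require Import all_boot all_order all_fingroup zify.
Set Implicit Arguments. Unset Strict Implicit. Unset Printing Implicit Defensive.

Ltac slia := (try change (Equality.sort Datatypes_nat__canonical__eqtype_Equality) with nat in * ); lia.

Fixpoint wrdm (m : nat) (ms : seq nat) : seq bool :=
  if ms is x :: r then nseq (m - x) true ++ false :: wrdm x r else [::].
Definition posl (ms : seq nat) :=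
  [seq d <- iota 1 (size ms).-1 | nth 0 ms d < nth 0 ms d.-1].

Lemma runs_head b w : exists k r, runs (b :: w) = (b, k) :: r.
Proof.
rewrite /=; case: (runs w) => [|[c k] r]; first by exists 1, [::].
case: eqP => [->|_]; first by exists k.+1, r.
by exists 1, ((c, k) :: r).
Qed.

Lemma dc_true w : descent_comp (true :: w) = descent_comp w.
Proof.
rewrite /descent_comp /=; case: (runs w) => [|[c k] r] //=; by case: c.
Qed.

Lemma dc_nseq c w : descent_comp (nseq c true ++ w) = descent_comp w.
Proof. by elim: c => //= c IH; rewrite dc_true. Qed.

Lemma runs_ceq b w c k r : runs w = (c, k) :: r ->
  runs (b :: w) = if b == c then (c, k.+1) :: r else (b, 1) :: (c, k) :: r.
Proof. by move=> /= ->. Qed.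

Lemma dc_ff w : descent_comp (false :: false :: w) =
  (head 0 (descent_comp (false :: w))).+1 :: behead (descent_comp (false :: w)).
Proof.
have [k [r E]] := runs_head false w.
by rewrite /descent_comp (runs_ceq false E) E.
Qed.

Lemma dc_ft w : descent_comp (false :: true :: w) = 1 :: descent_comp (true :: w).
Proof.
have [k [r E]] := runs_head true w.
by rewrite /descent_comp (runs_ceq false E) E.
Qed.

Lemma pairmap_succ a P :
  pairmap (fun u v => v - u) a.+1 (map S P) = pairmap (fun u v => v - u) a P.
Proof. by elim: P a => //= p P IH a; rewrite subSS IH. Qed.

Lemma alpha_cons1 N P : alpha N.+1 (1 :: map S P) = 1 :: alpha N P.
Proof.
rewrite /alpha /= pairmap_succ (last_map S) subSS.
by [].
Qed.

Lemma alpha_map N P : alpha N.+1 (map S P) =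
  (head 0 (alpha N P)).+1 :: behead (alpha N P).
Proof.
case: P => [|p P]; first by rewrite /alpha /= !subn0.
by rewrite /alpha /= pairmap_succ (last_map S) subSS !subn0.
Qed.

Lemma posl_rec x z r : posl [:: x, z & r] =
  if z < x then 1 :: map S (posl (z :: r)) else map S (posl (z :: r)).
Proof.
rewrite /posl /=.
have -> : iota 2 (size r) = map S (iota 1 (size r)).
  by rewrite (iotaDl 1 1); apply: eq_map => d; rewrite add1n.
rewrite filter_map.
have -> : [seq d <- iota 1 (size r) | preim S
         (fun d => nth 0 [:: x, z & r] d < nth 0 [:: x, z & r] d.-1) d]
        = [seq d <- iota 1 (size r) | nth 0 (z :: r) d < nth 0 (z :: r) d.-1].
  apply: eq_in_filter => d; rewrite mem_iota; case: d => //.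
by case: ifP.
Qed.

Lemma lemA ms m : ms != [::] ->
  descent_comp (wrdm m ms) = alpha (size ms) (posl ms).
Proof.
elim: ms m => // x r IH m _.
case: r IH => [|z r] IH.
  by rewrite /= dc_nseq /posl /= /alpha.
rewrite [wrdm _ _]/= dc_nseq posl_rec.
have IH' := IH x isT; rewrite [wrdm x _]/= in IH'.
rewrite dc_nseq in IH'.
case: ltnP => zx.
  have [k E] : exists k, x - z = k.+1 by exists (x - z).-1; rewrite prednK // subn_gt0.
  by rewrite E /= dc_ft dc_true dc_nseq IH' alpha_cons1.
have -> : x - z = 0 by apply/eqP; rewrite subn_eq0.
by rewrite /= dc_ff IH' alpha_map.
Qed.


Fixpoint cs a (c : seq nat) : seq nat :=
  if c is x :: c' then (if c' is [::] then [::] else (a + x) :: cs (a + x) c') else [::].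

Lemma cs_alpha a n S : path ltn a S ->
  cs a (rcons (pairmap (fun u v => v - u) a S) (n - last a S)) = S.
Proof.
elim: S a => [|s S IH] a //= /andP[lt_as pS].
have := IH s pS.
case E : (rcons _ _) => [|y l]; first by case: (pairmap _ _ _) E.
by rewrite subnKC ?(ltnW lt_as) // => ->.
Qed.

Lemma alpha_inj n S T : path ltn 0 S -> path ltn 0 T -> alpha n S = alpha n T -> S = T.
Proof. by move=> pS pT E; rewrite -(cs_alpha n pS) -(cs_alpha n pT) -/(alpha n S) E. Qed.

Fixpoint pmins (m : nat) (s : seq nat) : seq nat :=
  if s is x :: s' then minn m x :: pmins (minn m x) s' else [::].
Definition pm m s k := nth 0 (m :: pmins m s) k.

Lemma size_pmins m s : size (pmins m s) = size s.
Proof. by elim: s m => //= x s IH m; rewrite IH. Qed.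

Lemma path_pmins m s : path geq m (pmins m s).
Proof. by elim: s m => //= x s IH m; rewrite IH geq_minl. Qed.

Lemma pm_rec m s k : k < size s -> pm m s k.+1 = minn (pm m s k) (nth 0 s k).
Proof.
rewrite /pm; elim: s m k => // x s IH m [|k] //= ks.
by have := IH (minn m x) k ks.
Qed.

Lemma pm_le m s a k : a < k -> k <= size s -> pm m s k <= nth 0 s a.
Proof.
elim: k => // k IH ak ks; rewrite pm_rec //.
move: ak; rewrite ltnS leq_eqVlt => /orP[/eqP->|lt]; first by rewrite geq_minr.
by rewrite (leq_trans (geq_minl _ _)) // IH // ltnW.
Qed.

Lemma pm_mem m s k : 0 < k -> k <= size s -> nth 0 s 0 < m ->
  exists2 a, a < k & nth 0 s a = pm m s k.
Proof.
elim: k => // k IH _ ks s0; rewrite pm_rec //.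
case: k IH ks => [|k] IH ks.
  by exists 0 => //; rewrite /pm /=; lia.
have [a ak E] := IH isT (ltnW ks) s0.
case: (leqP (pm m s k.+1) (nth 0 s k.+1)) => h.
  by exists a; [lia | rewrite E; lia].
by exists k.+1; [lia | lia].
Qed.

Lemma nseq_false_inj a b u v :
  nseq a true ++ false :: u = nseq b true ++ false :: v -> a = b /\ u = v.
Proof.
elim: a b => [|a IH] [|b] //=; first by case.
by case=> /IH [-> ->].
Qed.


Lemma wrdm_inj m ms1 ms2 : path geq m ms1 -> path geq m ms2 ->
  wrdm m ms1 = wrdm m ms2 -> ms1 = ms2.
Proof.
elim: ms1 m ms2 => [|x r IH] m [|y r'] //=.
- by case: (m - y).
- by case: (m - x).
move=> /andP[xm p1] /andP[ym p2] /nseq_false_inj [E1 E2].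
have xy : x = y by lia.
by subst y; rewrite (IH x r') //.
Qed.

Definition G (w : seq bool) b := forall i, count negb (take i w) <= b + count id (take i w).

Lemma G_true w b : G w b.+1 -> G (true :: w) b.
Proof. by move=> H [|i] //=; have := H i; lia. Qed.

Lemma G_true_inv w b : G (true :: w) b -> G w b.+1.
Proof. by move=> H i; have := H i.+1 => /=; lia. Qed.

Lemma G_false w b : G w b -> G (false :: w) b.+1.
Proof. by move=> H [|i] //=; have := H i; lia. Qed.

Lemma G_false_inv w b : G (false :: w) b -> 0 < b /\ G w b.-1.
Proof.
move=> H; have := H 1; rewrite /= take0 /= => h1; split; first by lia.
by move=> i; have := H i.+1 => /=; lia.
Qed.

Lemma G_nseq c w b : G w (b + c) -> G (nseq c true ++ w) b.
Proof.
elim: c b => [|c IH] b; first by rewrite addn0.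
by move=> H /=; apply: G_true; apply: IH; rewrite addSnnS.
Qed.

Lemma path_geq_nth x r k : path geq x r -> k < size r -> nth 0 r k <= x.
Proof.
elim: r x k => // y r IH x [|k] /= /andP[yx p] ks //.
by rewrite (leq_trans (IH _ _ p ks)).
Qed.

Lemma path_geq_step m ms k : path geq m ms -> k < size ms ->
  nth 0 ms k <= nth 0 (m :: ms) k.
Proof.
elim: ms m k => // y r IH m [|k] /= /andP[yx p] ks //.
exact: IH.
Qed.

Lemma path_geq_mono m' m l : m' <= m -> path geq m' l -> path geq m l.
Proof. case: l => //= y l le /andP[h ->]; rewrite andbT; lia. Qed.

Lemma G_wrdm ms m b : path geq m ms ->
  (forall k, k < size ms -> k.+1 <= b + (m - nth 0 ms k)) -> G (wrdm m ms) b.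
Proof.
elim: ms m b => [|x r IH] m b /=; first by move=> _ _ i; case: i.
move=> /andP[xm p] H; apply: G_nseq.
have h0 := H 0 isT; rewrite /= in h0.
have -> : b + (m - x) = (b + (m - x)).-1.+1 by lia.
apply: G_false; apply: IH => // k ks.
have := H k.+1 ks => /=; have := path_geq_nth p ks; lia.
Qed.

Lemma path_geq_last x r : path geq x r -> last x r <= x.
Proof.
elim: r x => //= y r IH x /andP[yx p]; exact: leq_trans (IH _ p) yx.
Qed.

Lemma count_wrdm_true m ms : path geq m ms -> count id (wrdm m ms) = m - last m ms.
Proof.
elim: ms m => [|x r IH] m /=; first by rewrite subnn.
move=> /andP[xm p]; rewrite count_cat count_nseq /= IH //.
have : last x r <= x by apply: path_geq_last.
lia.
Qed.

Lemma count_wrdm_false m ms : count negb (wrdm m ms) = size ms.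
Proof. by elim: ms m => //= x r IH m; rewrite count_cat count_nseq /= IH; lia. Qed.

Fixpoint dec (m : nat) (w : seq bool) : seq nat :=
  match w with
  | [::] => [::]
  | true :: w' => dec m.-1 w'
  | false :: w' => m :: dec m w'
  end.

Lemma size_dec m w : size (dec m w) = count negb w.
Proof. by elim: w m => //= [[]] w IH m /=; rewrite IH. Qed.

Lemma path_dec m w : path geq m (dec m w).
Proof.
elim: w m => //= [[]] w IH m /=; last by rewrite leqnn IH.
by apply: path_geq_mono (IH _); apply: leq_pred.
Qed.

Lemma nseq_rcons j (b : bool) w : nseq j b ++ b :: w = b :: nseq j b ++ w.
Proof. by elim: j => //= j ->. Qed.

Lemma wrdm_dec w j m : last (j != 0) w = false -> j + count id w <= m ->
  wrdm m (dec (m - j) w) = nseq j true ++ w.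
Proof.
elim: w j m => [|b w IH] j m /=.
  by case: j.
case: b => /= hl hc.
  rewrite -subnS IH //; last by lia.
  by rewrite nseq_rcons.
rewrite subKn; last by lia.
have := IH 0 (m - j); rewrite subn0 => -> //; lia.
Qed.

Lemma dec_bound w m b : G w b -> count id w <= m ->
  forall k, k < size (dec m w) -> nth 0 (dec m w) k + k < m + b.
Proof.
elim: w m b => [|c w IH] m b //=.
case: c => /= H hc k ks.
  have := IH m.-1 b.+1 (G_true_inv H) ltac:(lia) k ks; lia.
have [b0 H'] := G_false_inv H.
case: k ks => [|k] ks /=; first by lia.
have := IH m b.-1 H' hc k ks; lia.
Qed.

Definition nf n (u : seq nat) (m : nat) :=
  head 0 [seq v <- iota 0 n | (m < v) && (v \notin u)].

Fixpoint bld n (m : nat) (u : seq nat) (ms : seq nat) : seq nat :=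
  if ms is x :: r then
    let v := if x < m then x else nf n u m in v :: bld n x (rcons u v) r
  else [::].

Lemma size_bld n m u ms : size (bld n m u ms) = size ms.
Proof. by elim: ms m u => //= x r IH m u; rewrite IH. Qed.

Lemma nth_bld n ms m u k : k < size ms ->
  nth 0 (bld n m u ms) k =
  if nth 0 ms k < nth 0 (m :: ms) k then nth 0 ms k
  else nf n (u ++ take k (bld n m u ms)) (nth 0 (m :: ms) k).
Proof.
elim: ms m u k => // x r IH m u [|k] ks /=; first by rewrite cats0.
by rewrite IH // cat_rcons.
Qed.

Lemma head_filter (p : pred nat) l : has p l ->
  p (head 0 (filter p l)) /\ head 0 (filter p l) \in l.
Proof.
elim: l => //= y l IH; case: ifP => py /=.
  by rewrite py mem_head.
by move=> h; have [a b] := IH h; split => //; rewrite in_cons b orbT.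
Qed.

Lemma head_filter_min (p : pred nat) i k v : v \in iota i k -> p v ->
  head 0 (filter p (iota i k)) <= v.
Proof.
elim: k i => // k IH i; rewrite /= in_cons => /orP[/eqP->|vi] pv.
  by rewrite pv.
case: ifP => pi //=.
  by move: vi; rewrite mem_iota; lia.
exact: IH.
Qed.

Lemma nf_spec n u m : has (fun v => (m < v) && (v \notin u)) (iota 0 n) ->
  [/\ nf n u m < n, m < nf n u m & nf n u m \notin u].
Proof.
move=> /head_filter [/andP[a b] c]; rewrite /nf; split => //.
by move: c; rewrite mem_iota.
Qed.

Lemma nf_min n u m v : v < n -> m < v -> v \notin u -> nf n u m <= v.
Proof. by move=> vn mv vu; apply: head_filter_min; rewrite ?mem_iota ?mv. Qed.

Lemma mem_take_nth (s : seq nat) k v : v \in take k s ->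
  exists2 a, a < k & nth 0 s a = v.
Proof.
move=> vin; exists (index v (take k s)).
  have := index_mem v (take k s); rewrite vin size_take => h.
  by apply: leq_trans h _; apply: geq_minl.
have h := index_mem v (take k s); rewrite vin size_take in h.
rewrite -(nth_take 0 (_ : index v (take k s) < k)) ?nth_index //.
by apply: leq_trans h _; apply: geq_minl.
Qed.

Lemma nth_in_take (s : seq nat) k a : a < k -> a < size s -> nth 0 s a \in take k s.
Proof.
move=> ak asz; rewrite -(nth_take 0 ak); apply: mem_nth; rewrite size_take.
by case: ifP.
Qed.

Lemma nth_notin_take (s : seq nat) k c : uniq s -> k <= c -> c < size s ->
  nth 0 s c \notin take k s.
Proof.
move=> us kc cs; apply/negP => /mem_take_nth [a ak].
move/eqP; rewrite nth_uniq //; [move/eqP; lia | exact: ltn_trans (leq_trans ak kc) cs].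
Qed.

Lemma count_iota (T : seq nat) p n : uniq T -> {subset iota p (n - p) <= T} ->
  n - p <= size T.
Proof. by move=> uT sub; have := uniq_leq_size (iota_uniq p (n - p)) sub; rewrite size_iota. Qed.

Lemma count_iota2 (T : seq nat) p n : uniq T -> (forall v, v \in T -> p <= v < n) ->
  size T <= n - p.
Proof.
move=> uT H; have := @uniq_leq_size _ T (iota p (n - p)) uT; rewrite size_iota; apply.
by move=> v /H; rewrite mem_iota; lia.
Qed.

Lemma bld_inv n ms : size ms = n -> path geq n ms ->
  (forall k, k < n -> nth 0 ms k + k < n) ->
  forall k, k <= n ->
  [/\ uniq (take k (bld n n [::] ms)), all (fun v => v < n) (take k (bld n n [::] ms))
     & pm n (bld n n [::] ms) k = nth 0 (n :: ms) k].
Proof.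
move=> sz pth bnd; set s := bld n n [::] ms; elim => [|k IH] kn.
  by rewrite take0.
have [u1 a1 p1] := IH (ltnW kn).
have ss : size s = n by rewrite size_bld.
have ks : k < size s by rewrite ss.
rewrite (take_nth 0 ks) rcons_uniq all_rcons pm_rec // p1.
have geM : forall v, v \in take k s -> nth 0 (n :: ms) k <= v.
  by move=> v /mem_take_nth [a ak <-]; rewrite -p1; apply: pm_le => //; exact: ltnW.
have stp := path_geq_step pth (_ : k < size ms).
have bk := bnd k kn.
have Ek := nth_bld n n [::] (_ : k < size ms); rewrite cat0s in Ek.
rewrite Ek; last by rewrite sz.
case: ifP => lt.
  rewrite u1 a1 /= andbT; split => //.
  - apply/negP => h; have := geM _ h; lia.
  - lia.
  - lia.
have ms_eq : nth 0 ms k = nth 0 (n :: ms) k.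
  have := stp ltac:(by rewrite sz); lia.
case: k IH kn u1 a1 p1 geM stp bk Ek ks lt ms_eq => [|k] IH kn u1 a1 p1 geM stp bk Ek ks lt ms_eq.
  by move: ms_eq bk => /= ->; lia.
set M := nth 0 (n :: ms) k.+1 in geM ms_eq p1 *.
have s0 : nth 0 s 0 < n.
  by move/allP: a1 => /(_ _ (nth_in_take (ltn0Sn k) (ltn_trans (ltn0Sn k) ks))).
have [a ak Ea] := pm_mem (ltn0Sn k) (ltnW ks) s0.
have Min : M \in take k.+1 s by rewrite -p1 -Ea; apply: nth_in_take; lia.
have hs : has (fun v => (M < v) && (v \notin take k.+1 s)) (iota 0 n).
  apply/negPn/negP => /hasPn H.
  have : n - M <= size (take k.+1 s).
    apply: count_iota => // v; rewrite mem_iota => /andP[h1 h2].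
    have := H v; rewrite mem_iota /= => /(_ ltac:(lia)).
    rewrite negb_and negbK => /orP[|//].
    rewrite -leqNgt => h3; have -> : v = M by lia.
    exact: Min.
  rewrite size_take ks; lia.
have [h1 h2 h3] := nf_spec hs.
rewrite -/s u1 a1 h3 /= andbT h1; split => //; lia.
Qed.

Definition av (s : seq nat) := forall a b c, a < b -> b < c -> c < size s ->
  ~~ ((nth 0 s a < nth 0 s c) && (nth 0 s c < nth 0 s b)).

Lemma bld_props n ms : size ms = n -> path geq n ms ->
  (forall k, k < n -> nth 0 ms k + k < n) ->
  [/\ size (bld n n [::] ms) = n, uniq (bld n n [::] ms),
      all (fun v => v < n) (bld n n [::] ms),
      pmins n (bld n n [::] ms) = ms & av (bld n n [::] ms)].
Proof.
move=> sz pth bnd; set s := bld n n [::] ms.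
have ss : size s = n by rewrite size_bld.
have [u a _] := bld_inv sz pth bnd (leqnn n).
have tk : take n s = s by rewrite -{1}ss take_size.
rewrite tk in u a.
have pmE : forall k, k <= n -> pm n s k = nth 0 (n :: ms) k.
  by move=> k kn; have [_ _ ->] := bld_inv sz pth bnd kn.
split => //.
  apply: (@eq_from_nth _ 0); first by rewrite size_pmins ss sz.
  by move=> k; rewrite size_pmins ss => kn; have := pmE k.+1 kn.
move=> i b c ib bc; rewrite ss => cn; apply/negP => /andP[h1 h2].
have bms : b < size ms by rewrite sz; slia.
have Eb := nth_bld n n [::] bms; rewrite cat0s -/s in Eb.
have pb := pmE b (ltnW (ltn_trans bc cn)).
have pb1 := pmE b.+1 (ltn_trans bc cn).
have sai : pm n s b <= nth 0 s i by apply: pm_le => //; rewrite ss; slia.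
move: Eb; case: ifP => lt Eb.
  have : pm n s b.+1 <= nth 0 s i by apply: pm_le; rewrite ?ss; slia.
  rewrite pb1 /= -Eb; slia.
have : nth 0 s b <= nth 0 s c.
  rewrite Eb; apply: nf_min.
  - by move/allP: a; apply; apply: mem_nth; rewrite ss.
  - by rewrite -pb; slia.
  - by apply: nth_notin_take => //; rewrite ?ss // ltnW.
slia.
Qed.

Lemma perm_mem n (s : seq nat) : uniq s -> all (fun v => v < n) s -> size s = n ->
  forall v, v < n -> v \in s.
Proof.
move=> us al sz v vn.
have sub : {subset s <= iota 0 n}.
  by move=> x xs; move/allP: al => /(_ x xs); rewrite mem_iota.
have [_ E] := uniq_min_size us sub ltac:(by rewrite size_iota sz).
by rewrite E mem_iota.
Qed.

Lemma index_lt (s : seq nat) v : v \in s -> index v s < size s.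
Proof. by rewrite index_mem. Qed.

Lemma char n (s : seq nat) k : uniq s -> all (fun v => v < n) s -> size s = n -> av s ->
  0 < k -> k < n -> pm n s k <= nth 0 s k ->
  [/\ pm n s k < nth 0 s k, nth 0 s k \notin take k s &
      forall v, pm n s k < v -> v < nth 0 s k -> v \in take k s].
Proof.
move=> us al sz avs k0 kn le.
have s0 : nth 0 s 0 < n by move/allP: al; apply; apply: mem_nth; slia.
have [a ak Ea] := pm_mem k0 (ltac:(slia) : k <= size s) s0.
have ne : nth 0 s a != nth 0 s k by rewrite nth_uniq //; slia.
split.
- by rewrite ltn_neqAle le andbT -Ea.
- by apply: nth_notin_take; rewrite ?sz.
move=> v lv vk; apply/negPn/negP => vnot.
have vn : v < n.
  have : nth 0 s k < n by move/allP: al; apply; apply: mem_nth; slia.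
  slia.
have vs := perm_mem us al sz vn.
set c := index v s.
have cs : c < size s by apply: index_lt.
have Ec : nth 0 s c = v by apply: nth_index.
have kc : k <= c.
  rewrite leqNgt; apply/negP => ck; move: vnot; rewrite -Ec nth_in_take //.
have kc' : k < c.
  rewrite ltn_neqAle kc andbT; apply/negP => /eqP kE; move: vk; rewrite -Ec -kE; slia.
have := avs a k c ak kc' cs; rewrite Ec Ea lv vk.
done.
Qed.

Lemma det n (s t : seq nat) : uniq s -> all (fun v => v < n) s -> size s = n -> av s ->
  uniq t -> all (fun v => v < n) t -> size t = n -> av t ->
  pmins n s = pmins n t -> s = t.
Proof.
move=> us als ss avs ut alt st avt E.
have pmE : forall k, pm n s k = pm n t k by move=> k; rewrite /pm E.
suff : forall k, k <= n -> take k s = take k t.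
  by move=> /(_ n (leqnn n)); rewrite -{1}ss -st !take_size.
elim => [|k IH] kn; first by rewrite !take0.
have ks : k < size s by rewrite ss.
have kt : k < size t by rewrite st.
rewrite (take_nth 0 ks) (take_nth 0 kt) IH ?(ltnW kn) //; congr rcons.
have rs := pm_rec n ks; have rt := pm_rec n kt.
rewrite !pmE in rs; rewrite rs in rt.
case: (ltnP (pm n t k.+1) (pm n t k)) => h.
  by move: h; rewrite {1}rs; slia.
have sk : pm n t k <= nth 0 s k by slia.
have tk : pm n t k <= nth 0 t k by slia.
case: k IH kn ks kt rs rt h sk tk => [|k] IH kn ks kt rs rt h sk tk.
  have : nth 0 t 0 < n by move/allP: alt; apply; apply: mem_nth; slia.
  by move: tk; rewrite /pm /=; slia.
have [a1 b1 c1] := char us als ss avs (ltn0Sn k) kn (ltac:(by rewrite pmE) : pm n s k.+1 <= nth 0 s k.+1).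
have [a2 b2 c2] := char ut alt st avt (ltn0Sn k) kn tk.
rewrite pmE IH ?(ltnW kn) // in a1 b1 c1.
case: (ltngtP (nth 0 s k.+1) (nth 0 t k.+1)) => // lt.
  by have := c2 _ a1 lt; rewrite (negbTE b1).
by have := c1 _ a2 lt; rewrite (negbTE b2).
Qed.

Lemma av_des n (s : seq nat) d : uniq s -> all (fun v => v < n) s -> size s = n -> av s ->
  0 < d -> d < n -> (nth 0 s d < nth 0 s d.-1) = (pm n s d.+1 < pm n s d).
Proof.
move=> us al sz avs d0 dn.
case: d d0 dn => // e _ dn /=.
rewrite pm_rec ?sz //.
have s0 : nth 0 s 0 < n by move/allP: al; apply; apply: mem_nth; slia.
have le := @pm_le n s e e.+1 (ltnSn e) ltac:(slia).
apply/idP/idP => h; last by slia.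
rewrite gtn_min ltnn /= ltnNge; apply/negP => h2.
have [a ak Ea] := pm_mem (ltn0Sn e) (ltac:(slia) : e.+1 <= size s) s0.
move: ak; rewrite ltnS leq_eqVlt => /orP[/eqP aE|ae]; first by subst a; slia.
have ne : nth 0 s a != nth 0 s e.+1 by rewrite nth_uniq //; slia.
have := avs a e e.+1 ae (ltnSn e) ltac:(slia).
by rewrite h andbT ltn_neqAle ne Ea h2.
Qed.

Lemma pm_bound n (s : seq nat) k : uniq s -> all (fun v => v < n) s -> k < size s ->
  pm n s k.+1 + k < n.
Proof.
move=> us al ks.
have := @count_iota2 (take k.+1 s) (pm n s k.+1) n (take_uniq _ us).
have stk : size (take k.+1 s) = k.+1.
  by rewrite size_take; case: ifP => // /negbT; rewrite -leqNgt; slia.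
rewrite stk => H.
have : k.+1 <= n - pm n s k.+1.
  apply: H => v vin; apply/andP; split.
    have [a ak <-] := mem_take_nth vin; apply: pm_le => //.
  by move/allP: al; apply; apply: mem_take vin.
slia.
Qed.

Lemma size_cnt (w : seq bool) : size w = count id w + count negb w.
Proof. by elim: w => //= [[]] w ->; rewrite ?addnS. Qed.

Lemma wrd_dyck n (s : seq nat) : 0 < n -> uniq s -> all (fun v => v < n) s -> size s = n ->
  is_dyck n (wrdm n (pmins n s)).
Proof.
move=> n0 us al sz.
have cf : count negb (wrdm n (pmins n s)) = n by rewrite count_wrdm_false size_pmins.
have ct : count id (wrdm n (pmins n s)) = n.
  rewrite count_wrdm_true ?path_pmins //.
  have -> : last n (pmins n s) = pm n s n by rewrite /pm (last_nth 0) size_pmins sz.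
  have z0 := perm_mem us al sz n0.
  have := index_lt z0; set a := index 0 s => ai.
  have Ea : nth 0 s a = 0 by apply: nth_index.
  have := @pm_le n s a n ltac:(slia) ltac:(slia); rewrite Ea; slia.
apply/and4P; split; [by rewrite size_cnt ct cf addnn | by rewrite ct | by rewrite cf | ].
apply/allP => i _.
have : G (wrdm n (pmins n s)) 0.
  apply: G_wrdm; first exact: path_pmins.
  move=> k; rewrite size_pmins => ks.
  have := pm_bound us al ks; rewrite /pm /=; slia.
by move=> /(_ i).
Qed.

Lemma dyck_G w n : is_dyck n w -> G w 0.
Proof.
case/and4P => _ _ _ /allP H i.
case: (leqP i (size w)) => h.
  by apply: H; rewrite mem_iota.
rewrite take_oversize ?(ltnW h) //.
have hs : size w \in iota 0 (size w).+1 by rewrite mem_iota add0n ltnSn.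
by have := H _ hs; rewrite take_size.
Qed.

Lemma dyck_last w n : 0 < n -> is_dyck n w -> last false w = false.
Proof.
move=> n0 D; have := dyck_G D; move: D.
case/lastP: w => // w' b; rewrite last_rcons; case: b => //.
case/and4P => _ ct cf _ /(_ (size w')).
rewrite -cats1 take_size_cat //.
move: ct cf; rewrite -!cats1 !count_cat /= => /eqP ct /eqP cf; slia.
Qed.

Lemma posl_des n (s : seq nat) : uniq s -> all (fun v => v < n) s -> size s = n -> av s ->
  [seq d <- iota 1 n.-1 | nth 0 s d < nth 0 s d.-1] = posl (pmins n s).
Proof.
move=> us al sz avs; rewrite /posl size_pmins sz.
apply: eq_in_filter => d; rewrite mem_iota => /andP[d1 d2].
rewrite (av_des us al sz avs d1); last by slia.
by case: d d1 d2.
Qed.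

Lemma path_filter_iota (P : pred nat) k : path ltn 0 [seq d <- iota 1 k | P d].
Proof.
rewrite path_sortedE; last exact: ltn_trans.
rewrite (sorted_filter ltn_trans _ (iota_ltn_sorted 1 k)) andbT.
by apply/allP => x; rewrite mem_filter mem_iota => /andP[_ /andP[h _]].
Qed.

Definition vals n (pi : 'S_n) : seq nat := [seq val (pi x) | x <- enum 'I_n].

Lemma size_vals n (pi : 'S_n) : size (vals pi) = n.
Proof. by rewrite size_map size_enum_ord. Qed.

Lemma nth_vals n (pi : 'S_n) (i : 'I_n) : nth 0 (vals pi) i = pi i.
Proof. by rewrite /vals (nth_map i) ?nth_ord_enum // size_enum_ord. Qed.

Lemma uniq_vals n (pi : 'S_n) : uniq (vals pi).
Proof.
rewrite map_inj_uniq ?enum_uniq // => x y /val_inj; exact: perm_inj.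
Qed.

Lemma all_vals n (pi : 'S_n) : all (fun v => v < n) (vals pi).
Proof. rewrite /vals; apply/allP => v /mapP [x _ ->]; exact: ltn_ord. Qed.

Lemma av_vals n (pi : 'S_n) : avoids132 pi -> av (vals pi).
Proof.
move=> H a b c ab bc; rewrite size_vals => cn.
have an : a < n by slia.
have bn : b < n by slia.
move: H; rewrite /avoids132 /contains132 => /existsPn /(_ (Ordinal an)).
move=> /existsPn /(_ (Ordinal bn)) /existsPn /(_ (Ordinal cn)) /=.
rewrite ab bc /=.
by rewrite -(nth_vals pi (Ordinal an)) -(nth_vals pi (Ordinal bn)) -(nth_vals pi (Ordinal cn)).
Qed.

Lemma vals_av n (pi : 'S_n) : av (vals pi) -> avoids132 pi.
Proof.
move=> H; apply/existsPn => i; apply/existsPn => j; apply/existsPn => k.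
apply/negP => /and4P[ij jk h1 h2].
have := H i j k ij jk; rewrite size_vals ltn_ord => /(_ isT).
by rewrite !nth_vals h1 h2.
Qed.

Lemma mk_perm n (s : seq nat) : uniq s -> all (fun v => v < n.+1) s -> size s = n.+1 ->
  exists pi : 'S_n.+1, vals pi = s.
Proof.
move=> us al sz.
have lt : forall i : 'I_n.+1, nth 0 s i < n.+1.
  by move=> i; move/allP: al; apply; apply: mem_nth; rewrite sz.
pose f := fun i : 'I_n.+1 => (inord (nth 0 s i) : 'I_n.+1).
have finj : injective f.
  move=> i j /(congr1 (@nat_of_ord _)); rewrite /f !inordK ?lt // => /eqP.
  by rewrite nth_uniq ?sz // => /eqP /val_inj.
exists (perm finj).
apply: (@eq_from_nth _ 0); first by rewrite size_vals sz.
move=> i; rewrite size_vals => ilt.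
by rewrite -[i]/(val (Ordinal ilt)) nth_vals permE /f inordK.
Qed.

Definition Phi n (pi : 'S_n) : (n.*2).-tuple bool :=
  insubd (nseq_tuple n.*2 false) (wrdm n (pmins n (vals pi))).

Lemma val_Phi n (pi : 'S_n) : 0 < n -> val (Phi pi) = wrdm n (pmins n (vals pi)).
Proof.
move=> n0; rewrite /Phi val_insubd.
have := wrd_dyck n0 (uniq_vals pi) (all_vals pi) (size_vals pi).
by case/and4P => -> _ _ _.
Qed.

Theorem lemma4p6 (n : nat) (S : seq nat) :
  1 <= n -> subset_of_nm1 n S ->
  #|[set pi : 'S_n | avoids132 pi & Des pi == S]| =
  #|[set w : (n.*2).-tuple bool | is_dyck n w & descent_comp w == alpha n S]|.
Proof.
move=> n0 vS; case: n n0 vS => // n _ vS.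
set N := n.+1.
have pS : path ltn 0 S.
  move: vS => /andP[sS aS]; rewrite path_sortedE ?sS ?andbT; last exact: ltn_trans.
  by apply/allP => x /(allP aS) /andP[].
have DesE : forall pi : 'S_N, avoids132 pi -> Des pi = posl (pmins N (vals pi)).
  move=> pi H; rewrite -(posl_des (uniq_vals pi) (all_vals pi) (size_vals pi) (av_vals H)).
  by [].
have pD : forall pi : 'S_N, path ltn 0 (Des pi) by move=> pi; apply: path_filter_iota.
have dcE : forall pi : 'S_N, avoids132 pi -> descent_comp (Phi pi) = alpha N (Des pi).
  move=> pi H; rewrite val_Phi // lemA; last by rewrite -size_eq0 size_pmins size_vals -lt0n.
  by rewrite size_pmins size_vals DesE.
rewrite -(@card_in_imset _ _ (@Phi N)).
  apply: eq_card => w; rewrite !inE.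
  apply/imsetP/idP.
    move=> [pi]; rewrite inE => /andP[H /eqP DS] ->.
    rewrite val_Phi // wrd_dyck ?uniq_vals ?all_vals ?size_vals //=.
    by rewrite -val_Phi // dcE // DS.
  move=> /andP[D /eqP dcw].
  set ms := dec N w.
  have szms : size ms = N by rewrite size_dec; case/and4P: D => _ _ /eqP.
  have pms : path geq N ms by apply: path_dec.
  have ctw : count id w <= N by case/and4P: D => _ /eqP -> _ _.
  have bnd : forall k, k < N -> nth 0 ms k + k < N.
    move=> k kn; rewrite -[N in _ < N]addn0; apply: dec_bound (dyck_G D) _ _ _ => //.
    by rewrite szms.
  have [sz us al pmE avs] := bld_props szms pms bnd.
  have [pi Epi] := mk_perm us al sz.
  have wE : wrdm N (pmins N (vals pi)) = w.
    rewrite Epi pmE /ms.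
    have := @wrdm_dec w 0 N; rewrite subn0; apply => //.
    exact: dyck_last D.
  have H : avoids132 pi by apply: vals_av; rewrite Epi.
  exists pi.
    rewrite inE H /=; apply/eqP; apply: (@alpha_inj N _ _ (pD pi) pS).
    by rewrite -dcE // -dcw val_Phi // wE.
  by apply: val_inj; rewrite val_Phi.
move=> p1 p2; rewrite !inE => /andP[H1 _] /andP[H2 _] E.
have := congr1 val E; rewrite !val_Phi // => /wrdm_inj.
move=> /(_ (path_pmins _ _) (path_pmins _ _)) Ep.
have := det (uniq_vals p1) (all_vals p1) (size_vals p1) (av_vals H1)
  (uniq_vals p2) (all_vals p2) (size_vals p2) (av_vals H2) Ep.
move=> Ev; apply/permP => i; apply: ord_inj.
by rewrite -!nth_vals Ev.
Qed.
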